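(* Fix an irrational $\alpha\in(0,1)$. (i) Let $w\in W_\alpha$. If $|w|<|s_n|$ for some $n\in\mathbb{N}$ with $n\ge2$, then $w$ is a subword of $s_{n+2}$. (ii) Let $w\in W_\alpha$ be a subword of $s_n$ for some $n\in\mathbb{N}$. Then there exist words $x,y\in W_\alpha$ with $xwy=s_{n+3}$ and $|x|,|y|\ge|s_{n+1}|$.
   Context: Let $\alpha=[a_1,a_2,\dots]$ be the continued fraction expansion of $\alpha$. Define words over $\{0,1\}$ by $s_{-1}=1$, $s_0=0$, $s_1=s_0^{a_1-1}s_{-1}$, $s_n=s_{n-1}^{a_n}s_{n-2}$ for $n\ge2$. For $\theta\in[0,1)$, $v_{\alpha,\theta}$ is the two-sided infinite word with letters $v_{\alpha,\theta}(n)=\chi_{[1-\alpha,1)}(n\alpha+\theta\bmod1)$, $n\in\mathbb{Z}$; $W_\alpha$ is the set of all finite non-empty subwords of the words $v_{\alpha,\theta}$, $\theta\in[0,1)$. $|w|$ denotes the length of a word $w$. $\mathbb{N}=\{1,2,\dots\}$. *)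

(* Defs.v *)
(* concrete reals R, words as lists of bool (false = 0, true = 1). *)
From Stdlib Require Import Reals ZArith List.
Import ListNotations.
Open Scope R_scope.

Definition irrational (x : R) : Prop :=
  ~ exists (p q : Z), q <> 0%Z /\ x = IZR p / IZR q.

(* Continued fraction expansion alpha = [a_1, a_2, ...] of alpha in (0,1),
   via the Gauss map: cf_rem 0 = alpha, cf_rem (k+1) = frac (1 / cf_rem k),
   and a_(k+1) = floor (1 / cf_rem k). *)
Fixpoint cf_rem (alpha : R) (k : nat) : R :=
  match k with
  | O => alpha
  | S k' => frac_part (/ cf_rem alpha k')
  end.

(* pq alpha k = a_k for k >= 1 (pq alpha 0 is a meaningless default). *)
Definition pq (alpha : R) (k : nat) : nat :=
  match k with
  | O => O
  | S k' => Z.to_nat (Int_part (/ cf_rem alpha k'))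
  end.

Definition wpow (u : list bool) (m : nat) : list bool := concat (repeat u m).

(* sp alpha n = (s_{n-1}, s_n) *)
Fixpoint sp (alpha : R) (n : nat) : list bool * list bool :=
  match n with
  | O => ([true], [false])
  | S k =>
      let (p, c) := sp alpha k in
      match k with
      | O => (c, wpow c (pq alpha 1 - 1) ++ p)
      | _ => (c, wpow c (pq alpha (S k)) ++ p)
      end
  end.

Definition s (alpha : R) (n : nat) : list bool := snd (sp alpha n).

Definition v (alpha theta : R) (n : Z) : bool :=
  if Rle_dec (1 - alpha) (frac_part (IZR n * alpha + theta)) then true else false.

Definition inW (alpha : R) (w : list bool) : Prop :=
  w <> [] /\
  exists theta : R, 0 <= theta < 1 /\
  exists k : Z, forall i : nat, (i < length w)%nat ->
    nth i w false = v alpha theta (k + Z.of_nat i)%Z.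

Definition subword (u t : list bool) : Prop :=
  exists x y : list bool, x ++ u ++ y = t.

(* Main.v *)
Require Import Defs.
From Stdlib Require Import Reals ZArith List Lia Lra.
Import ListNotations.
Open Scope R_scope.


Definition letter (b x : R) : bool := if Rle_dec (1 - b) x then true else false.
Definition rot (b x : R) : R := if Rlt_dec (x + b) 1 then x + b else x + b - 1.
Fixpoint pw (b x : R) (n : nat) : list bool :=
  match n with O => [] | S n' => letter b x :: pw b (rot b x) n' end.
Fixpoint orbit (b x : R) (n : nat) : R :=
  match n with O => x | S n' => orbit b (rot b x) n' end.

Definition pick (P : list bool * list bool) (c : bool) : list bool :=
  if c then snd P else fst P.
Definition flat (P : list bool * list bool) (l : list bool) : list bool :=
  concat (map (pick P) l).
Definition compose (P Q : list bool * list bool) : list bool * list bool :=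
  (flat P (fst Q), flat P (snd Q)).

Lemma flat_app P l1 l2 : flat P (l1 ++ l2) = flat P l1 ++ flat P l2.
Proof. unfold flat. rewrite map_app, concat_app. reflexivity. Qed.

Lemma flat_cons P c l : flat P (c :: l) = pick P c ++ flat P l.
Proof. reflexivity. Qed.

Lemma flat_compose P Q l : flat P (flat Q l) = flat (compose P Q) l.
Proof.
  induction l as [|c l IH]; [reflexivity|].
  rewrite !flat_cons, flat_app, IH. destruct c; reflexivity.
Qed.

Lemma flat_id l : flat ([false],[true]) l = l.
Proof. induction l as [|c l IH]; [reflexivity|]. rewrite flat_cons, IH. destruct c; reflexivity. Qed.

Lemma pw_length b x n : length (pw b x n) = n.
Proof. revert x; induction n; intros; simpl; auto. Qed.

Lemma pw_app b x n m : pw b x (n + m) = pw b x n ++ pw b (orbit b x n) m.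
Proof. revert x; induction n; intros; simpl; auto. rewrite IHn. reflexivity. Qed.

Lemma nth_pw b x n i : (i < n)%nat -> nth i (pw b x n) false = letter b (orbit b x i).
Proof.
  revert x i; induction n; intros x i Hi; [lia|].
  destruct i; simpl; auto. apply IHn. lia.
Qed.

Lemma skipn_app_len {A} (l1 l2 : list A) d : skipn (length l1 + d) (l1 ++ l2) = skipn d l2.
Proof. induction l1; simpl; auto. Qed.

Lemma firstn_app_le {A} (l1 l2 : list A) e : (e <= length l1)%nat -> firstn e (l1 ++ l2) = firstn e l1.
Proof. intros H. rewrite firstn_app. replace (e - length l1)%nat with 0%nat by lia. simpl. apply app_nil_r. Qed.

Definition subword' := subword.

Lemma subword_trans u v w : subword u v -> subword v w -> subword u w.
Proof.
  intros [a [b H1]] [c [d H2]]. subst. exists (c ++ a), (b ++ d).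
  rewrite <- !app_assoc. reflexivity.
Qed.

Lemma subword_skipn_firstn (Y : list bool) d N : subword (skipn d (firstn (d+N) Y)) Y.
Proof.
  exists (firstn d (firstn (d+N) Y)), (skipn (d+N) Y).
  rewrite app_assoc, firstn_skipn, firstn_skipn. reflexivity.
Qed.

Lemma subword_prefix (u L r A B : list bool) :
  A ++ u ++ B = L ++ r -> (length A + length u <= length L)%nat -> subword u L.
Proof.
  intros H Hl.
  assert (E: firstn (length L) (L ++ r) = L) by (rewrite firstn_app_le; [apply firstn_all|lia]).
  rewrite <- H in E.
  rewrite firstn_app, firstn_app in E.
  rewrite (firstn_all2 (n:=length L) A) in E by lia. rewrite (firstn_all2 (n:=(length L - length A)%nat) u) in E by lia.
  exists A, (firstn (length L - length A - length u) B).
  rewrite <- E at 2. reflexivity.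
Qed.

Lemma wpow_S u j : wpow u (S j) = u ++ wpow u j.
Proof. reflexivity. Qed.
Lemma wpow_Sr u j : wpow u (S j) = wpow u j ++ u.
Proof.
  induction j. unfold wpow; simpl; rewrite !app_nil_r; reflexivity.
  rewrite (wpow_S u (S j)), IHj, app_assoc, <- wpow_S, IHj. reflexivity.
Qed.
Lemma wpow_false j : wpow [false] j = repeat false j.
Proof. induction j; simpl; auto. rewrite <- IHj. reflexivity. Qed.
Lemma wpow_length u j : length (wpow u j) = (j * length u)%nat.
Proof. induction j; [reflexivity|]. rewrite wpow_S, length_app, IHj. simpl. lia. Qed.

Lemma frac_unique r z : 0 <= r - IZR z < 1 -> frac_part r = r - IZR z.
Proof.
  intros H. unfold frac_part, Int_part.
  assert (E: (z + 1)%Z = up r).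
  { apply tech_up; rewrite plus_IZR; simpl; lra. }
  rewrite <- E. replace (z + 1 - 1)%Z with z by lia. reflexivity.
Qed.

Lemma frac_rot a r : 0 < a < 1 -> frac_part (r + a) = rot a (frac_part r).
Proof.
  intros Ha. unfold rot. pose proof (base_fp r) as [H1 H2].
  assert (Hf: frac_part r = r - IZR (Int_part r)) by reflexivity.
  rewrite Hf in *.
  destruct (Rlt_dec _ 1).
  - rewrite (frac_unique _ (Int_part r)); lra.
  - rewrite (frac_unique _ (Int_part r + 1)); rewrite ?plus_IZR; simpl; lra.
Qed.

Lemma orbit_frac a r i : 0 < a < 1 -> orbit a (frac_part r) i = frac_part (r + INR i * a).
Proof.
  intros Ha. revert r; induction i; intros r; simpl.
  - f_equal. lra.
  - rewrite <- frac_rot by auto. rewrite IHi. f_equal. destruct i; simpl; lra.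
Qed.

Lemma v_orbit a th k i : 0 < a < 1 ->
  v a th (k + Z.of_nat i)%Z = letter a (orbit a (frac_part (IZR k * a + th)) i).
Proof.
  intros Ha. rewrite orbit_frac by auto. unfold v, letter.
  rewrite plus_IZR, <- INR_IZR_INZ.
  replace ((IZR k + INR i) * a + th) with (IZR k * a + th + INR i * a) by ring.
  reflexivity.
Qed.

Lemma rot_range b x : 0 < b < 1 -> 0 <= x < 1 -> 0 <= rot b x < 1.
Proof. intros. unfold rot. destruct Rlt_dec; lra. Qed.

Lemma L_exact b b' : 0 < b -> 2 * b < 1 -> b' * (1 - b) = b ->
  forall M z, 0 <= z < 1 ->
  pw b ((1 - b) * z) (length (flat ([false],[false;true]) (pw b' z M)))
  = flat ([false],[false;true]) (pw b' z M).
Proof.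
  intros Hb Hb2 Hb' M. induction M; intros z Hz; [reflexivity|].
  assert (Hb'0 : 0 < b' < 1) by nra.
  simpl pw. rewrite flat_cons.
  destruct (Rle_dec (1 - b') z) as [Hle|Hlt].
  - assert (El: letter b' z = true) by (unfold letter; destruct Rle_dec; auto; lra).
    rewrite El. simpl pick. simpl length. simpl pw.
    assert (E1: letter b ((1 - b) * z) = false).
    { unfold letter. destruct Rle_dec; auto. nra. }
    assert (E2: rot b ((1 - b) * z) = (1-b)*z + b).
    { unfold rot. destruct Rlt_dec; nra. }
    assert (E3: letter b ((1-b)*z + b) = true).
    { unfold letter. destruct Rle_dec; auto. nra. }
    assert (E4: rot b ((1-b)*z + b) = (1 - b) * rot b' z).
    { unfold rot. destruct Rlt_dec; destruct Rlt_dec; nra. }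
    rewrite E1, E2, E3, E4, IHM. reflexivity. apply rot_range; lra.
  - assert (El: letter b' z = false) by (unfold letter; destruct Rle_dec; auto; lra).
    rewrite El. simpl pick. simpl length. simpl pw.
    assert (E1: letter b ((1 - b) * z) = false).
    { unfold letter. destruct Rle_dec; auto. nra. }
    assert (E4: rot b ((1-b)*z) = (1 - b) * rot b' z).
    { unfold rot. destruct Rlt_dec; destruct Rlt_dec; nra. }
    rewrite E1, E4, IHM. reflexivity. apply rot_range; lra.
Qed.

Lemma R_exact b b' : 1 < 2 * b -> b < 1 -> b' * b = 2 * b - 1 ->
  forall M z, 0 <= z < 1 ->
  pw b ((1 - b) + b * z) (length (flat ([true;false],[true]) (pw b' z M)))
  = flat ([true;false],[true]) (pw b' z M).
Proof.
  intros Hb Hb2 Hb' M. induction M; intros z Hz; [reflexivity|].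
  assert (Hb'0 : 0 < b' < 1) by nra.
  simpl pw. rewrite flat_cons.
  destruct (Rle_dec (1 - b') z) as [Hle|Hlt].
  - assert (El: letter b' z = true) by (unfold letter; destruct Rle_dec; auto; lra).
    rewrite El. simpl pick. simpl length. simpl pw.
    assert (E1: letter b ((1 - b) + b * z) = true).
    { unfold letter. destruct Rle_dec; auto. nra. }
    assert (E4: rot b ((1-b) + b * z) = (1 - b) + b * rot b' z).
    { unfold rot. destruct Rlt_dec; destruct Rlt_dec; nra. }
    rewrite E1, E4, IHM. reflexivity. apply rot_range; lra.
  - assert (El: letter b' z = false) by (unfold letter; destruct Rle_dec; auto; lra).
    rewrite El. simpl pick. simpl length. simpl pw.
    assert (E1: letter b ((1 - b) + b * z) = true).
    { unfold letter. destruct Rle_dec; auto. nra. }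
    assert (E2: rot b ((1 - b) + b * z) = b * z).
    { unfold rot. destruct Rlt_dec; nra. }
    assert (E3: letter b (b * z) = false).
    { unfold letter. destruct Rle_dec; auto. nra. }
    assert (E4: rot b (b * z) = (1 - b) + b * rot b' z).
    { unfold rot. destruct Rlt_dec; destruct Rlt_dec; nra. }
    rewrite E1, E2, E3, E4, IHM. reflexivity. apply rot_range; lra.
Qed.

Definition Rep (a b : R) (P : list bool * list bool) : Prop :=
  forall x, 0 <= x < 1 -> forall N, exists y d M r, 0 <= y < 1 /\
    (d < length (pick P (letter b y)))%nat /\
    pw a x N ++ r = skipn d (flat P (pw b y M)).

Lemma flat_length_ge sig l : (forall c, 1 <= length (pick sig c))%nat ->
  (length l <= length (flat sig l))%nat.
Proof.
  intros H. induction l as [|c l IH]; simpl; [lia|].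
  rewrite flat_cons, length_app. specialize (H c). lia.
Qed.

Lemma core a b b' sig P g x N r d M z :
  (forall M z, 0 <= z < 1 -> pw b (g z) (length (flat sig (pw b' z M))) = flat sig (pw b' z M)) ->
  (forall c, 1 <= length (pick sig c))%nat -> 0 <= z < 1 ->
  pw a x N ++ r = skipn d (flat P (pw b (g z) M)) ->
  exists r', pw a x N ++ r' = skipn d (flat (compose P sig) (pw b' z M)).
Proof.
  intros Hex Hsig Hz H.
  pose proof (flat_length_ge sig (pw b' z M) Hsig) as Hl. rewrite pw_length in Hl.
  rewrite <- flat_compose, <- (Hex M z Hz).
  replace (length (flat sig (pw b' z M))) with (M + (length (flat sig (pw b' z M)) - M))%nat by lia.
  rewrite pw_app, flat_app, skipn_app, <- H, <- app_assoc.
  eexists. reflexivity.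
Qed.

Lemma pick_compose P sig c : pick (compose P sig) c = flat P (pick sig c).
Proof. destruct c; reflexivity. Qed.

Lemma stepL a b b' P : 0 < b -> 2 * b < 1 -> b' * (1 - b) = b ->
  Rep a b P -> Rep a b' (compose P ([false],[false;true])).
Proof.
  intros Hb Hb2 Hb' HR x Hx N.
  destruct (HR x Hx N) as [y [d [M [r [Hy [Hd H]]]]]].
  assert (Hsig: forall c, (1 <= length (pick ([false],[false;true]) c))%nat) by (destruct c; simpl; lia).
  destruct (Rle_dec (1 - b) y) as [Hle|Hlt].
  -
    set (y' := y - b).
    assert (Ely: letter b y = true) by (unfold letter; destruct Rle_dec; auto; lra).
    assert (Ely': letter b y' = false) by (unfold letter, y'; destruct Rle_dec; auto; lra).
    assert (Er: rot b y' = y) by (unfold rot, y'; destruct Rlt_dec; lra).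
    set (z := y' / (1 - b)).
    assert (Hz: 0 <= z < 1).
    { unfold z, y'. split. apply Rmult_le_pos; [lra|]. left; apply Rinv_0_lt_compat; lra.
      apply (Rmult_lt_reg_r (1 - b)); [lra|]. field_simplify; lra. }
    assert (Eg: (1 - b) * z = y') by (unfold z; field; lra).
    assert (H2: pw a x N ++ r = skipn (length (fst P) + d) (flat P (pw b ((1-b)*z) (S M)))).
    { rewrite Eg. simpl pw. rewrite Ely', Er, flat_cons. simpl pick. rewrite skipn_app_len. exact H. }
    destruct (core a b b' _ P (fun z => (1-b)*z) x N r _ (S M) z (L_exact b b' Hb Hb2 Hb') Hsig Hz H2) as [r' H3].
    exists z, (length (fst P) + d)%nat, (S M), r'. split; [auto|]. split; [|exact H3].
    assert (Elz: letter b' z = true).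
    { unfold letter. destruct Rle_dec as [|n]; auto. exfalso; apply n.
      apply (Rmult_le_reg_r (1 - b)); [lra|]. replace (z * (1 - b)) with y' by (rewrite <- Eg; ring). unfold y'. nra. }
    rewrite Elz, pick_compose. simpl. unfold flat; simpl. rewrite !app_nil_r, length_app.
    rewrite Ely in Hd. simpl in Hd. lia.
  - set (z := y / (1 - b)).
    assert (Ely: letter b y = false) by (unfold letter; destruct Rle_dec; auto; lra).
    assert (Hz: 0 <= z < 1).
    { unfold z. split. apply Rmult_le_pos; [lra|]. left; apply Rinv_0_lt_compat; lra.
      apply (Rmult_lt_reg_r (1 - b)); [lra|]. field_simplify; lra. }
    assert (Eg: (1 - b) * z = y) by (unfold z; field; lra).
    rewrite <- Eg in H.
    destruct (core a b b' _ P (fun z => (1-b)*z) x N r _ M z (L_exact b b' Hb Hb2 Hb') Hsig Hz H) as [r' H3].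
    exists z, d, M, r'. split; [auto|]. split; [|exact H3].
    rewrite pick_compose. rewrite Ely in Hd. simpl in Hd.
    destruct (letter b' z); unfold flat; simpl; rewrite ?app_nil_r, ?length_app; lia.
Qed.

Lemma stepR a b b' P : 1 < 2 * b -> b < 1 -> b' * b = 2 * b - 1 ->
  Rep a b P -> Rep a b' (compose P ([true;false],[true])).
Proof.
  intros Hb Hb2 Hb' HR x Hx N.
  destruct (HR x Hx N) as [y [d [M [r [Hy [Hd H]]]]]].
  assert (Hsig: forall c, (1 <= length (pick ([true;false],[true]) c))%nat) by (destruct c; simpl; lia).
  destruct (Rle_dec (1 - b) y) as [Hle|Hlt].
  - set (z := (y - (1 - b)) / b).
    assert (Ely: letter b y = true) by (unfold letter; destruct Rle_dec; auto; lra).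
    assert (Hz: 0 <= z < 1).
    { unfold z. split. apply Rmult_le_pos; [lra|]. left; apply Rinv_0_lt_compat; lra.
      apply (Rmult_lt_reg_r b); [lra|]. field_simplify; lra. }
    assert (Eg: (1 - b) + b * z = y) by (unfold z; field; lra).
    rewrite <- Eg in H.
    destruct (core a b b' _ P (fun z => (1-b) + b*z) x N r _ M z (R_exact b b' Hb Hb2 Hb') Hsig Hz H) as [r' H3].
    exists z, d, M, r'. split; [auto|]. split; [|exact H3].
    rewrite pick_compose. rewrite Ely in Hd. simpl in Hd.
    destruct (letter b' z); unfold flat; simpl; rewrite ?app_nil_r, ?length_app; lia.
  - set (y' := y + 1 - b).
    assert (Ely: letter b y = false) by (unfold letter; destruct Rle_dec; auto; lra).
    assert (Ely': letter b y' = true) by (unfold letter, y'; destruct Rle_dec; auto; lra).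
    assert (Er: rot b y' = y) by (unfold rot, y'; destruct Rlt_dec; lra).
    set (z := y / b).
    assert (Hz: 0 <= z < 1).
    { unfold z. split. apply Rmult_le_pos; [lra|]. left; apply Rinv_0_lt_compat; lra.
      apply (Rmult_lt_reg_r b); [lra|]. field_simplify; lra. }
    assert (Eg: (1 - b) + b * z = y') by (unfold z, y'; field; lra).
    assert (H2: pw a x N ++ r = skipn (length (snd P) + d) (flat P (pw b ((1-b) + b*z) (S M)))).
    { rewrite Eg. simpl pw. rewrite Ely', Er, flat_cons. simpl pick. rewrite skipn_app_len. exact H. }
    destruct (core a b b' _ P (fun z => (1-b) + b*z) x N r _ (S M) z (R_exact b b' Hb Hb2 Hb') Hsig Hz H2) as [r' H3].
    exists z, (length (snd P) + d)%nat, (S M), r'. split; [auto|]. split; [|exact H3].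
    assert (Elz: letter b' z = false).
    { unfold letter. destruct Rle_dec as [Hc|]; auto. exfalso.
      assert (Hc2: (1 - b') * b <= z * b) by (apply Rmult_le_compat_r; lra).
      replace (z * b) with y in Hc2 by (unfold z; field; lra). nra. }
    rewrite Elz, pick_compose. simpl. unfold flat; simpl. rewrite !app_nil_r, length_app.
    rewrite Ely in Hd. simpl in Hd. lia.
Qed.

Lemma Rep_eq a b b2 P Q : Rep a b P -> b = b2 -> P = Q -> Rep a b2 Q.
Proof. intros H -> ->. exact H. Qed.

Lemma INR_le2 j A : (j + 2 <= A)%nat -> INR j + 2 <= INR A.
Proof.
  intros H. replace 2 with (INR 2) by (simpl; lra). rewrite <- plus_INR. apply le_INR. exact H.
Qed.

Lemma inner_even al g g' A P : 0 < g -> 0 < g' < 1 -> / g = INR (S A) + g' ->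
  Rep al g P ->
  Rep al (1 - g') (wpow (fst P) A ++ snd P ++ fst P, wpow (fst P) A ++ snd P).
Proof.
  intros Hg Hg' Hinv HR.
  assert (Cl: forall j, (j <= A)%nat -> Rep al (/ (INR (S A) + g' - INR j)) (fst P, wpow (fst P) j ++ snd P)).
  { induction j; intros Hj.
    - apply (Rep_eq _ _ _ _ _ HR). rewrite <- Hinv. simpl. rewrite Rminus_0_r, Rinv_inv. reflexivity.
      destruct P; reflexivity.
    - assert (H2 := INR_le2 j (S A) ltac:(lia)).
      rewrite S_INR in H2.
      specialize (IHj ltac:(lia)).
      eapply Rep_eq. apply (stepL al (/ (INR (S A) + g' - INR j)) (/ (INR (S A) + g' - INR (S j)))).
      + apply Rinv_0_lt_compat. rewrite S_INR in *. lra.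
      + rewrite S_INR in *. apply (Rmult_lt_reg_r (INR A + 1 + g' - INR j)); [lra|].
        field_simplify; lra.
      + rewrite !S_INR in *. field. split; lra.
      + exact IHj.
      + reflexivity.
      + unfold compose, flat; simpl. rewrite !app_nil_r, app_assoc. reflexivity. }
  specialize (Cl A (le_n A)).
  replace (INR (S A) + g' - INR A) with (1 + g') in Cl by (rewrite S_INR; ring).
  eapply Rep_eq. apply (stepR al (/ (1 + g')) (1 - g')).
  - apply (Rmult_lt_reg_r (1 + g')); [lra|]. field_simplify; lra.
  - apply (Rmult_lt_reg_r (1 + g')); [lra|]. field_simplify; lra.
  - field. lra.
  - exact Cl.
  - reflexivity.
  - unfold compose, flat; simpl. rewrite !app_nil_r, <- app_assoc. reflexivity.
Qed.

Lemma inner_odd al g g' A P : 0 < g < 1 -> 0 < g' < 1 -> / g = INR (S A) + g' ->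
  Rep al (1 - g) P ->
  Rep al g' (wpow (snd P) A ++ fst P, wpow (snd P) A ++ fst P ++ snd P).
Proof.
  intros Hg Hg' Hinv HR.
  assert (Cl: forall j, (j <= A)%nat -> Rep al (1 - / (INR (S A) + g' - INR j)) (wpow (snd P) j ++ fst P, snd P)).
  { induction j; intros Hj.
    - apply (Rep_eq _ _ _ _ _ HR). rewrite <- Hinv. simpl. rewrite Rminus_0_r, Rinv_inv. reflexivity.
      destruct P; reflexivity.
    - assert (H2 := INR_le2 j (S A) ltac:(lia)).
      rewrite S_INR in H2.
      specialize (IHj ltac:(lia)).
      eapply Rep_eq. apply (stepR al (1 - / (INR (S A) + g' - INR j)) (1 - / (INR (S A) + g' - INR (S j)))).
      + rewrite S_INR in *. apply (Rmult_lt_reg_r (INR A + 1 + g' - INR j)); [lra|].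
        field_simplify; lra.
      + rewrite S_INR in *. assert (0 < / (INR A + 1 + g' - INR j)) by (apply Rinv_0_lt_compat; lra). lra.
      + rewrite !S_INR in *. field. split; lra.
      + exact IHj.
      + reflexivity.
      + unfold compose, flat; simpl. rewrite !app_nil_r, app_assoc. reflexivity. }
  specialize (Cl A (le_n A)).
  replace (INR (S A) + g' - INR A) with (1 + g') in Cl by (rewrite S_INR; ring).
  eapply Rep_eq. apply (stepL al (1 - / (1 + g')) g').
  - apply (Rmult_lt_reg_r (1 + g')); [lra|]. field_simplify; lra.
  - apply (Rmult_lt_reg_r (1 + g')); [lra|]. field_simplify; lra.
  - field. lra.
  - exact Cl.
  - reflexivity.
  - unfold compose, flat; simpl. rewrite !app_nil_r, <- app_assoc. reflexivity.
Qed.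

Lemma cf_step g : 0 < g < 1 -> irrational g ->
  (1 <= Int_part (/ g))%Z /\ / g = IZR (Int_part (/ g)) + frac_part (/ g) /\
  0 < frac_part (/ g) < 1 /\ irrational (frac_part (/ g)).
Proof.
  intros Hg Hirr.
  assert (Hf: frac_part (/ g) = / g - IZR (Int_part (/ g))) by reflexivity.
  pose proof (base_fp (/ g)) as [F1 F2].
  assert (Hgi: 1 < / g).
  { apply (Rmult_lt_reg_r g); [lra|]. rewrite Rinv_l by lra. lra. }
  assert (Hz: (1 <= Int_part (/ g))%Z).
  { assert (0 < IZR (Int_part (/ g))) by lra. apply lt_IZR in H. lia. }
  assert (Hirr2: irrational (frac_part (/ g))).
  { intros [p [q [Hq E]]]. apply Hirr.
    set (z := Int_part (/ g)) in *.
    assert (E2: / g = (IZR z * IZR q + IZR p) / IZR q).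
    { assert (IZR q <> 0) by (apply not_0_IZR; auto).
      assert (E3: / g = IZR z + IZR p / IZR q) by lra.
      rewrite E3. field. auto. }
    exists q, (z * q + p)%Z. split.
    - intros H0. rewrite <- mult_IZR, <- plus_IZR, H0 in E2. unfold Rdiv in E2.
      rewrite Rmult_0_l in E2. lra.
    - rewrite plus_IZR, mult_IZR. rewrite <- (Rinv_inv g), E2.
      assert (IZR q <> 0) by (apply not_0_IZR; auto).
      assert (IZR z * IZR q + IZR p <> 0).
      { intros H0. rewrite H0 in E2. unfold Rdiv in E2. rewrite Rmult_0_l in E2. lra. }
      field. auto. }
  split; [auto|]. split; [lra|]. split; [|auto]. split; [|lra].
  destruct (Req_dec (frac_part (/ g)) 0) as [E|E]; [|lra].
  exfalso. apply Hirr2. exists 0%Z, 1%Z. split; [lia|]. rewrite E. simpl. field.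
Qed.

Lemma cf_all al : 0 < al < 1 -> irrational al -> forall k, 0 < cf_rem al k < 1 /\ irrational (cf_rem al k).
Proof.
  intros Ha Hi k. induction k; simpl; auto.
  destruct IHk as [H1 H2]. destruct (cf_step _ H1 H2) as [_ [_ [H3 H4]]]. auto.
Qed.

Lemma cf_rel al : 0 < al < 1 -> irrational al -> forall k,
  (1 <= pq al (S k))%nat /\ / cf_rem al k = INR (S (pq al (S k) - 1)) + cf_rem al (S k).
Proof.
  intros Ha Hi k. destruct (cf_all al Ha Hi k) as [H1 H2].
  destruct (cf_step _ H1 H2) as [Hz [E _]].
  simpl pq. simpl cf_rem.
  split. lia.
  replace (S (Z.to_nat (Int_part (/ cf_rem al k)) - 1)) with (Z.to_nat (Int_part (/ cf_rem al k))) by lia.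
  rewrite INR_IZR_INZ, Z2Nat.id by lia. exact E.
Qed.

Lemma fst_sp al m : fst (sp al (S m)) = s al m.
Proof. unfold s. simpl. destruct (sp al m). destruct m; reflexivity. Qed.

Lemma s_rec al m : s al (S (S m)) = wpow (s al (S m)) (pq al (S (S m))) ++ s al m.
Proof.
  assert (E: sp al (S m) = (s al m, s al (S m))).
  { rewrite <- (fst_sp al m). unfold s. destruct (sp al (S m)); reflexivity. }
  unfold s at 1.
  change (sp al (S (S m))) with (let (p, c) := sp al (S m) in (c, wpow c (pq al (S (S m))) ++ p)).
  rewrite E. reflexivity.
Qed.

Lemma s1 al : s al 1 = wpow [false] (pq al 1 - 1) ++ [true].
Proof. reflexivity. Qed.

Definition slope al k := if Nat.even k then cf_rem al k else 1 - cf_rem al k.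
Definition Phi al k := if Nat.even k then (s al k, s al k ++ s al (k-1)) else (s al k ++ s al (k-1), s al k).

Lemma Rep_base al : Rep al al ([false],[true]).
Proof.
  intros y Hy N. exists y, 0%nat, N, []. split; auto. split. destruct letter; simpl; lia.
  rewrite app_nil_r, flat_id. reflexivity.
Qed.

Theorem level al : 0 < al < 1 -> irrational al -> forall k, (1 <= k)%nat -> Rep al (slope al k) (Phi al k).
Proof.
  intros Ha Hi k Hk. induction k as [|k IH]; [lia|].
  destruct (cf_all al Ha Hi k) as [Hg Hgi].
  destruct (cf_all al Ha Hi (S k)) as [Hg' _].
  destruct (cf_rel al Ha Hi k) as [Hp Hrel].
  destruct k as [|k].
  -
    pose proof (inner_even al al _ _ ([false],[true]) ltac:(lra) Hg' Hrel (Rep_base al)) as H.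
    eapply Rep_eq. exact H. reflexivity. unfold Phi. simpl Nat.even. cbv iota.
    rewrite s1. simpl. rewrite <- app_assoc. reflexivity.
  - specialize (IH ltac:(lia)).
    assert (E2: Nat.even (S (S k)) = negb (Nat.even (S k))).
    { rewrite (Nat.even_succ (S k)), <- Nat.negb_even. reflexivity. }
    unfold slope, Phi in *. rewrite E2.
    destruct (Nat.even (S k)) eqn:Ev; simpl negb; cbv iota in *.
    + pose proof (inner_even al _ _ _ _ (proj1 Hg) Hg' Hrel IH) as H.
      eapply Rep_eq. exact H. reflexivity. simpl fst; simpl snd.
      replace (S (S k) - 1)%nat with (S k) by lia. replace (S k - 1)%nat with k by lia.
      rewrite ?Nat.sub_0_r, s_rec. destruct (pq al (S (S k))) as [|A]; [lia|].
      simpl (S A - 1)%nat. rewrite ?Nat.sub_0_r, wpow_Sr. rewrite <- !app_assoc. reflexivity.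
    + pose proof (inner_odd al _ _ _ _ Hg Hg' Hrel IH) as H.
      eapply Rep_eq. exact H. reflexivity. simpl fst; simpl snd.
      replace (S (S k) - 1)%nat with (S k) by lia. replace (S k - 1)%nat with k by lia.
      rewrite ?Nat.sub_0_r, s_rec. destruct (pq al (S (S k))) as [|A]; [lia|].
      simpl (S A - 1)%nat. rewrite ?Nat.sub_0_r, wpow_Sr. rewrite <- !app_assoc. reflexivity.
Qed.

Lemma s_len_pos al m : (1 <= length (s al m))%nat.
Proof.
  assert (H: forall m, (1 <= length (s al m))%nat /\ (1 <= length (s al (S m)))%nat).
  { clear m. intros m. induction m as [|m [IH1 IH2]].
    - split. simpl. lia. rewrite s1, length_app. simpl. lia.
    - split; auto. rewrite s_rec, length_app. lia. }
  apply (H m).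
Qed.

Lemma near_comm al m : exists pi x y,
  s al (S m) ++ s al m = pi ++ [x;y] /\ s al m ++ s al (S m) = pi ++ [y;x].
Proof.
  induction m as [|m [pi [x [y [H1 H2]]]]].
  - exists (repeat false (pq al 1 - 1)), true, false. rewrite s1, wpow_false. split.
    + simpl. rewrite <- app_assoc. reflexivity.
    + change (s al 0) with [false]. change ([false] ++ repeat false (pq al 1 - 1) ++ [true]) with (false :: repeat false (pq al 1 - 1) ++ [true]). rewrite app_comm_cons, repeat_cons, <- app_assoc. reflexivity.
  - exists (wpow (s al (S m)) (pq al (S (S m))) ++ pi), y, x. rewrite s_rec. split.
    + rewrite <- app_assoc, H2, app_assoc. reflexivity.
    + rewrite app_assoc, <- wpow_S, wpow_Sr, <- app_assoc, H1, app_assoc. reflexivity.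
Qed.

Lemma Phi_cases al n c : pick (Phi al n) c = s al n \/ pick (Phi al n) c = s al n ++ s al (n-1).
Proof. unfold Phi. destruct (Nat.even n), c; simpl; auto. Qed.

Lemma pw_inW al w : 0 < al < 1 -> inW al w -> exists x0, 0 <= x0 < 1 /\ w = pw al x0 (length w).
Proof.
  intros Ha [Hne [th [Hth [k Hk]]]].
  exists (frac_part (IZR k * al + th)). split.
  - pose proof (base_fp (IZR k * al + th)). lra.
  - apply nth_ext with (d := false) (d' := false). rewrite pw_length; auto.
    intros i Hi. rewrite nth_pw by auto. rewrite Hk by auto. apply v_orbit; auto.
Qed.

Lemma inW_sub al th k N u : 0 < al < 1 -> 0 <= th < 1 -> u <> [] ->
  subword u (pw al (frac_part (IZR k * al + th)) N) -> inW al u.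
Proof.
  intros Ha Hth Hne [A [B H]]. split; auto. exists th. split; auto.
  exists (k + Z.of_nat (length A))%Z. intros i Hi.
  assert (Hl: (length A + i < N)%nat).
  { rewrite <- (pw_length al (frac_part (IZR k * al + th)) N), <- H, !length_app. lia. }
  transitivity (nth (length A + i) (pw al (frac_part (IZR k * al + th)) N) false).
  - rewrite <- H, app_nth2_plus, app_nth1 by auto. reflexivity.
  - rewrite nth_pw by auto. rewrite <- v_orbit by auto. f_equal. lia.
Qed.

Lemma pick_le P c : (length (pick P c) <= length (fst P) + length (snd P))%nat.
Proof. destruct c; simpl; lia. Qed.

Lemma decomp al n x0 N : 0 < al < 1 -> irrational al -> (1 <= n)%nat -> 0 <= x0 < 1 ->
  (length (s al n) + length (s al (n-1)) < N)%nat ->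
  exists d B0 T rest r, (B0 = s al n \/ B0 = s al n ++ s al (n-1)) /\ (d < length B0)%nat /\
    pw al x0 N ++ r = skipn d (B0 ++ (s al n ++ T) ++ rest).
Proof.
  intros Ha Hi Hn Hx HN.
  destruct (level al Ha Hi n Hn x0 Hx N) as [y [d [M [r [Hy [Hd H]]]]]].
  assert (HB: forall c, (length (pick (Phi al n) c) <= length (s al n) + length (s al (n-1)))%nat).
  { intros c. destruct (Phi_cases al n c) as [E|E]; rewrite E; rewrite ?length_app; lia. }
  destruct M as [|[|M]].
  - simpl in H. unfold flat in H; simpl in H. rewrite skipn_nil in H.
    apply (f_equal (@length bool)) in H. rewrite length_app, pw_length in H. simpl in H. lia.
  - simpl in H. unfold flat in H. simpl in H. rewrite ?app_nil_r in H.
    apply (f_equal (@length bool)) in H. rewrite length_app, pw_length, length_skipn in H.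
    specialize (HB (letter (slope al n) y)). lia.
  - simpl pw in H. rewrite !flat_cons in H.
    destruct (Phi_cases al n (letter (slope al (n)) (rot (slope al n) y))) as [E|E]; rewrite E in H.
    + exists d, (pick (Phi al n) (letter (slope al n) y)), [], (flat (Phi al n) (pw (slope al n)
        (rot (slope al n) (rot (slope al n) y)) M)), r.
      split; [apply Phi_cases|]. split; [exact Hd|]. rewrite app_nil_r. exact H.
    + exists d, (pick (Phi al n) (letter (slope al n) y)), (s al (n-1)), (flat (Phi al n) (pw (slope al n)
        (rot (slope al n) (rot (slope al n) y)) M)), r.
      split; [apply Phi_cases|]. split; [exact Hd|]. exact H.
Qed.

Lemma s_in_pw al m : 0 < al < 1 -> irrational al -> (1 <= m)%nat ->
  exists N, subword (s al m) (pw al (frac_part (IZR 0 * al + 0)) N).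
Proof.
  intros Ha Hi Hm.
  set (N := (2 * (length (s al m) + length (s al (m-1))) + 1)%nat).
  assert (Hx: 0 <= frac_part (IZR 0 * al + 0) < 1) by (pose proof (base_fp (IZR 0 * al + 0)); lra).
  destruct (decomp al m _ N Ha Hi Hm Hx ltac:(unfold N; lia)) as [d [B0 [T [rest [r [HB [Hd H]]]]]]].
  exists N.
  rewrite skipn_app in H. replace (d - length B0)%nat with 0%nat in H by lia. simpl in H.
  rewrite <- app_assoc in H.
  apply (subword_prefix _ _ _ _ _ (eq_sym H)).
  rewrite pw_length, length_skipn. destruct HB as [E|E]; rewrite E in *; rewrite ?length_app in *; unfold N; lia.
Qed.

Lemma Y_in_s al m : 0 < al < 1 -> irrational al ->
  subword (s al (S m) ++ s al m ++ s al (S m)) (s al (S (S (S m)))).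
Proof.
  intros Ha Hi.
  destruct (cf_rel al Ha Hi (S (S m))) as [Hc _].
  destruct (cf_rel al Ha Hi (S m)) as [Hb _].
  rewrite (s_rec al (S m)), (s_rec al m).
  destruct (pq al (S (S (S m)))) as [|c]; [lia|].
  destruct (pq al (S (S m))) as [|b]; [lia|].
  rewrite wpow_Sr, (wpow_Sr (s al (S m)) b).
  exists (wpow (wpow (s al (S m)) b ++ s al (S m) ++ s al m) c ++ wpow (s al (S m)) b), [].
  rewrite !app_nil_r, <- !app_assoc. reflexivity.
Qed.

Lemma part1 al w n : 0 < al < 1 -> irrational al -> inW al w -> (1 <= n)%nat ->
  (length w < length (s al n))%nat -> subword w (s al (n + 2)).
Proof.
  intros Ha Hi Hw Hn Hl.
  destruct (pw_inW al w Ha Hw) as [x0 [Hx Ew]].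
  set (N := length w) in *.
  set (q := length (s al n)). set (q' := length (s al (n-1))).
  destruct (decomp al n x0 (N + (q + q' + 1)) Ha Hi Hn Hx ltac:(unfold q, q'; lia))
    as [d [B0 [T [rest [r [HB [Hd H]]]]]]].
  assert (Ew2: w = skipn d (firstn (d + N) (B0 ++ (s al n ++ T) ++ rest))).
  { rewrite <- firstn_skipn_comm, <- H, pw_app, <- app_assoc, firstn_app_le by (rewrite pw_length; lia).
    rewrite firstn_all2 by (rewrite pw_length; lia). exact Ew. }
  destruct n as [|m]; [lia|]. replace (S m - 1)%nat with m in * by lia.
  set (Y := s al (S m) ++ s al m ++ s al (S m)).
  assert (EY: firstn (d + N) (B0 ++ (s al (S m) ++ T) ++ rest) = firstn (d + N) Y).
  { destruct HB as [E|E]; subst B0.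
    - unfold Y. rewrite !(firstn_app (d+N) (s al (S m))). f_equal.
      set (e := (d + N - length (s al (S m)))%nat).
      destruct (near_comm al m) as [pi [x [y [H1 H2]]]].
      assert (Lp: (length pi + 2 = length (s al (S m)) + length (s al m))%nat).
      { apply (f_equal (@length bool)) in H1. rewrite !length_app in H1. simpl in H1. lia. }
      pose proof (s_len_pos al m).
      assert (He: (e <= length (s al (S m)))%nat) by (unfold e, q in *; lia).
      assert (He2: (e <= length pi)%nat) by (unfold e, q in *; lia).
      rewrite <- app_assoc, firstn_app_le by exact He.
      rewrite <- (firstn_app_le (s al (S m)) (s al m) e He), H1, firstn_app_le by exact He2.
      rewrite <- (firstn_app_le pi [y;x] e He2), <- H2. reflexivity.
    - unfold Y. rewrite <- !app_assoc.
      rewrite !(app_assoc (s al (S m)) (s al m)).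
      rewrite (app_assoc _ (s al (S m))).
      rewrite firstn_app_le. reflexivity.
      rewrite !length_app. unfold q, q' in *. rewrite length_app in Hd. lia. }
  rewrite EY in Ew2. rewrite Ew2.
  eapply subword_trans. apply subword_skipn_firstn.
  replace (S m + 2)%nat with (S (S (S m))) by lia. apply Y_in_s; auto.
Qed.

Lemma inW_of_s al u m : 0 < al < 1 -> irrational al -> (1 <= m)%nat -> u <> [] ->
  subword u (s al m) -> inW al u.
Proof.
  intros Ha Hi Hm Hne Hs.
  destruct (s_in_pw al m Ha Hi Hm) as [N HN].
  apply (inW_sub al 0 0 N u Ha ltac:(lra) Hne). eapply subword_trans; eauto.
Qed.

Lemma part2 al w n : 0 < al < 1 -> irrational al -> (1 <= n)%nat -> subword w (s al n) ->
  exists x y : list bool, inW al x /\ inW al y /\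
       x ++ w ++ y = s al (n + 3) /\
       (length (s al (n + 1)) <= length x)%nat /\
       (length (s al (n + 1)) <= length y)%nat.
Proof.
  intros Ha Hi Hn [p [q Hs]].
  destruct (cf_rel al Ha Hi (S (S n))) as [Hc _].
  destruct (cf_rel al Ha Hi (S n)) as [Hb _].
  replace (n + 3)%nat with (S (S (S n))) by lia. replace (n + 1)%nat with (S n) by lia.
  pose proof (s_len_pos al (S n)) as Hpos.
  assert (E: s al (S (S (S n))) =
     (wpow (s al (S n)) (pq al (S (S n))) ++ p) ++ w ++
     (q ++ wpow (s al (S (S n))) (pq al (S (S (S n))) - 1) ++ s al (S n))).
  { rewrite (s_rec al (S n)). destruct (pq al (S (S (S n)))) as [|c]; [lia|].
    rewrite wpow_S. simpl (S c - 1)%nat. rewrite Nat.sub_0_r.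
    rewrite (s_rec al n) at 1. rewrite <- Hs. rewrite <- !app_assoc. reflexivity. }
  assert (L1: (length (s al (S n)) <= length (wpow (s al (S n)) (pq al (S (S n))) ++ p))%nat).
  { rewrite length_app, wpow_length. pose proof (Nat.mul_le_mono_r 1 _ (length (s al (S n))) Hb). lia. }
  assert (L2: (length (s al (S n)) <= length (q ++ wpow (s al (S (S n))) (pq al (S (S (S n))) - 1) ++ s al (S n)))%nat).
  { rewrite !length_app. lia. }
  eexists; eexists; split; [|split; [|split; [exact (eq_sym E)|split; [exact L1|exact L2]]]].
  - apply (inW_of_s al _ (S (S (S n))) Ha Hi ltac:(lia)).
    + intros H0. rewrite H0 in L1. simpl in L1. lia.
    + exists [], (w ++ (q ++ wpow (s al (S (S n))) (pq al (S (S (S n))) - 1) ++ s al (S n))).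
      rewrite E. reflexivity.
  - apply (inW_of_s al _ (S (S (S n))) Ha Hi ltac:(lia)).
    + intros H0. rewrite H0 in L2. simpl in L2. lia.
    + exists ((wpow (s al (S n)) (pq al (S (S n))) ++ p) ++ w), [].
      rewrite E, app_nil_r, <- app_assoc. reflexivity.
Qed.

Theorem proposition5 (alpha : R) (Ha : 0 < alpha < 1) (Hirr : irrational alpha) :
  (forall (w : list bool) (n : nat), inW alpha w -> (2 <= n)%nat ->
     (length w < length (s alpha n))%nat -> subword w (s alpha (n + 2))) /\
  (forall (w : list bool) (n : nat), (1 <= n)%nat -> inW alpha w ->
     subword w (s alpha n) ->
     exists x y : list bool, inW alpha x /\ inW alpha y /\
       x ++ w ++ y = s alpha (n + 3) /\
       (length (s alpha (n + 1)) <= length x)%nat /\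
       (length (s alpha (n + 1)) <= length y)%nat).
Proof.
  split.
  - intros w n Hw Hn Hl. apply part1; auto. lia.
  - intros w n Hn Hw Hs. apply part2; auto.
Qed.
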